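(* Let $G$ be a graph and $S\subseteq V(G)$. Then one can admissibly remove a subset of $S$ from $G$ such that, in the remaining graph, the remaining vertices of $S$ form a clique and each of them has odd degree in the remaining graph.
   Context: Removing a set $T$ of vertices from a graph $G$ is a simple admissible removal if $T$ is an independent set in $G$ and the number of edges between $T$ and $V(G)\setminus T$ is even. Removing a (not necessarily independent) set of vertices is admissible if it can be realised by a sequence of simple admissible removals, each performed in the graph remaining after the previous ones. Degrees are always taken in the current remaining graph. *)

(* Defs.v *)
(* A (finite simple) graph is a symmetric irreflexive
   relation e on a finite vertex type T.  A "remaining graph" is the
   induced subgraph on a vertex set R : {set T}. *)
From mathcomp Require Import all_boot.
Set Implicit Arguments. Unset Strict Implicit. Unset Printing Implicit Defensive.

Section Graphs.
Variable T : finType.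
Variable e : rel T.

Definition deg_in (R : {set T}) (x : T) : nat := #|[set y in R | e x y]|.

Definition independent_in (R X : {set T}) : bool :=
  [forall x in X, forall y in X, ~~ e x y].

(* number of edges of G[R] between X and R \ X (X disjoint from R \ X, so
   each such edge is counted exactly once as an ordered pair) *)
Definition cut_size (R X : {set T}) : nat :=
  #|[set p : T * T | [&& p.1 \in X, p.2 \in R :\: X & e p.1 p.2]]|.

Definition simple_admissible (R X : {set T}) : bool :=
  [&& X \subset R, independent_in R X & ~~ odd (cut_size R X)].

Inductive admissible : {set T} -> {set T} -> Prop :=
| adm_refl R : admissible R R
| adm_step R X R' : simple_admissible R X -> admissible (R :\: X) R' ->
                    admissible R R'.

Definition clique_in (R C : {set T}) : bool :=
  (C \subset R) && [forall x in C, forall y in C, (x != y) ==> e x y].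

End Graphs.

(* Main.v *)
Require Import Defs.
From mathcomp Require Import all_boot.

Section Aux.
Variable T : finType.
Variable e : rel T.
Hypothesis e_sym : symmetric e.
Hypothesis e_irr : irreflexive e.

Lemma pair_inj (x : T) : injective (pair x : T -> T * T).
Proof. by move=> a b []. Qed.

Lemma cut1 R x : cut_size e R [set x] = deg_in e R x.
Proof.
rewrite /cut_size /deg_in.
have -> : [set p : T * T | [&& p.1 \in [set x], p.2 \in R :\: [set x] & e p.1 p.2]]
   = pair x @: [set y in R | e x y].
  apply/setP => p; apply/idP/idP.
  - move: p => [a b]; rewrite !inE /= => /and3P[/eqP -> /andP[_ bR] exb].
    by apply/imsetP; exists b; rewrite ?inE ?bR ?exb.
  - case/imsetP => b; rewrite inE => /andP[bR exb] ->; rewrite !inE /= eqxx bR exb /=.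
    by rewrite !andbT; apply/eqP => bx; move: exb; rewrite bx e_irr.
exact: (card_imset _ (@pair_inj x)).
Qed.

Lemma cut2 R x y : x != y -> ~~ e x y ->
  cut_size e R [set x; y] = deg_in e R x + deg_in e R y.
Proof.
move=> nxy nexy.
rewrite /cut_size /deg_in.
have -> : [set p : T * T | [&& p.1 \in [set x; y], p.2 \in R :\: [set x; y] & e p.1 p.2]]
   = pair x @: [set z in R | e x z] :|: pair y @: [set z in R | e y z].
  apply/setP => p; apply/idP/idP.
  - move: p => [a b]; rewrite !inE /= => /and3P[ha /andP[_ bR] exb].
    case/orP: ha => /eqP ha; subst a.
      by apply/orP; left; apply/imsetP; exists b; rewrite ?inE ?bR ?exb.
    by apply/orP; right; apply/imsetP; exists b; rewrite ?inE ?bR ?exb.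
  - rewrite in_setU => /orP[] /imsetP[b]; rewrite inE => /andP[bR exb] ->;
      rewrite !inE /= eqxx bR exb ?orbT /= !andbT.
    + apply/negP => /orP[] /eqP bx; move: exb; rewrite bx ?e_irr //.
      by rewrite (negbTE nexy).
    + apply/negP => /orP[] /eqP bx; move: exb; rewrite bx ?e_irr //.
      by rewrite e_sym (negbTE nexy).
rewrite cardsU !card_imset; try apply: pair_inj.
suff -> : pair x @: [set z in R | e x z] :&: pair y @: [set z in R | e y z] = set0.
  by rewrite cards0 subn0.
apply/setP => p; rewrite !inE; apply/negbTE; apply/negP => /andP[/imsetP[a _ ->] /imsetP[b _ []]].
by move=> xy; move: nxy; rewrite xy eqxx.
Qed.

Lemma key (S : {set T}) n : forall R : {set T}, #|R| <= n ->
  exists R', [/\ admissible e R R', R :\: R' \subset S,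
    clique_in e R' (S :&: R') & forall x, x \in S :&: R' -> odd (deg_in e R' x)].
Proof.
elim: n => [|n IH] R hR.
  move: hR; rewrite leqn0 cards_eq0 => /eqP ->.
  exists set0; split; first exact: adm_refl.
  - by rewrite setD0 sub0set.
  - by rewrite /clique_in setI0 sub0set; apply/forallP => x; rewrite inE.
  - by move=> x; rewrite setI0 inE.
case: (boolP [exists x in S :&: R, ~~ odd (deg_in e R x)]).
  case/existsP => x /andP[]; rewrite inE => /andP[xS xR] ev.
  have [|R'' [a1 a2 a3 a4]] := IH (R :\: [set x]).
    by rewrite -ltnS (leq_trans _ hR) //; apply: proper_card; rewrite properD1.
  exists R''; split => //.
  - apply: (adm_step (X := [set x])) => //.
    by rewrite /simple_admissible sub1set xR cut1 ev andbT;
       apply/forallP => a; apply/implyP; rewrite inE => /eqP ->;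
       apply/forallP => b; apply/implyP; rewrite inE => /eqP ->; rewrite e_irr.
  - apply/subsetP => z; rewrite inE => /andP[zR'' zR].
    case: (boolP (z == x)) => [/eqP -> //|zx].
    by apply: (subsetP a2); rewrite !inE zR'' zx zR.
move/existsPn => hodd.
have hodd' : forall x, x \in S :&: R -> odd (deg_in e R x).
  by move=> x xSR; move: (hodd x); rewrite xSR /= negbK.
case: (boolP [exists x in S :&: R, exists y in S :&: R, (x != y) && ~~ e x y]).
  case/existsP => x /andP[xSR] /existsP[y] /andP[ySR] /andP[nxy nexy].
  move: (xSR) (ySR); rewrite !inE => /andP[xS xR] /andP[yS yR].
  have [|R'' [a1 a2 a3 a4]] := IH (R :\: [set x; y]).
    rewrite -ltnS (leq_trans _ hR) //.
    apply: leq_ltn_trans (subset_leq_card _) (proper_card (properD1 xR)).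
    by apply: setDS; rewrite sub1set !inE eqxx.
  exists R''; split => //.
  - apply: (adm_step (X := [set x; y])) => //.
    rewrite /simple_admissible cut2 // oddD (hodd' x xSR) (hodd' y ySR) /=.
    rewrite andbT; apply/andP; split.
      by apply/subsetP => z; rewrite !inE => /orP[] /eqP ->.
    apply/forallP => a; apply/implyP; rewrite !inE => /orP[] /eqP ->;
    apply/forallP => b; apply/implyP; rewrite !inE => /orP[] /eqP ->;
      by rewrite ?e_irr // e_sym.
  - apply/subsetP => z; rewrite inE => /andP[zR'' zR].
    case: (boolP (z == x)) => [/eqP -> //|zx].
    case: (boolP (z == y)) => [/eqP -> //|zy].
    by apply: (subsetP a2); rewrite !inE zR'' zR (negbTE zx) (negbTE zy) !andbT.
move/existsPn => hcl.
exists R; split => //.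
- exact: adm_refl.
- by rewrite setDv sub0set.
- rewrite /clique_in subsetIr /=; apply/forallP => x; apply/implyP => xSR.
  apply/forallP => y; apply/implyP => ySR.
  move: (hcl x); rewrite xSR /= => /existsPn /(_ y); rewrite ySR /= negb_and negbK.
  by rewrite negbK; case/orP => [/eqP -> | ->]; rewrite ?eqxx ?implybT.
Qed.

End Aux.

Theorem mainTheorem6 (T : finType) (e : rel T)
  (e_sym : symmetric e) (e_irr : irreflexive e) (S : {set T}) :
  exists R : {set T},
    [/\ admissible e [set: T] R,
        ~: R \subset S,
        clique_in e R (S :&: R)
      & forall x, x \in S :&: R -> odd (deg_in e R x)].
Proof.
have [R [h1 h2 h3 h4]] := @key T e e_sym e_irr S _ _ (leqnn #|[set: T]|).
by exists R; split => //; rewrite -setTD.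
Qed.
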